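(* For every two-dimensional Minkowski space $X$ we have $m(X)=3$.
   Context: A Minkowski space is a finite-dimensional real normed space $(X,\|\cdot\|)$. For a set $S\subseteq X$, its midpoint set is $M(S)=\{\tfrac12(x+y): x,y\in S,\ x\neq y\}$. A set $S\subseteq X$ is an M-set if every vector in $M(S)$ has norm exactly $1$ and every vector in $S$ has norm strictly greater than $1$. $m(X)$ denotes the largest cardinality of an M-set in $X$ if such a largest finite cardinality exists, and $m(X)=\infty$ otherwise. *)

(* Defs.v *)
From Stdlib Require Import Reals List.
Import ListNotations.
Open Scope R_scope.

(* Every two-dimensional real normed space is linearly isometric to
   R^2 = R*R equipped with some norm; we model X as (R*R, N). *)
Definition vec := (R * R)%type.
Definition vadd (x y : vec) : vec := (fst x + fst y, snd x + snd y).
Definition vscale (a : R) (x : vec) : vec := (a * fst x, a * snd x).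
Definition vzero : vec := (0, 0).

Record is_norm (N : vec -> R) : Prop := {
  norm_nonneg : forall x, 0 <= N x;
  norm_definite : forall x, N x = 0 -> x = vzero;
  norm_homog : forall a x, N (vscale a x) = Rabs a * N x;
  norm_triangle : forall x y, N (vadd x y) <= N x + N y
}.

Definition midpt (x y : vec) : vec := vscale (1/2) (vadd x y).

Definition M_set (N : vec -> R) (S : vec -> Prop) : Prop :=
  (forall x y, S x -> S y -> x <> y -> N (midpt x y) = 1) /\
  (forall x, S x -> 1 < N x).

Definition enumerates (S : vec -> Prop) (l : list vec) : Prop :=
  NoDup l /\ forall x, S x <-> In x l.

(* m(X) = k : there is an M-set of cardinality k, and every M-set
   (possibly infinite) is finite of cardinality at most k. *)
Definition m_equals (N : vec -> R) (k : nat) : Prop :=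
  (exists S l, M_set N S /\ enumerates S l /\ length l = k) /\
  (forall S, M_set N S -> exists l, enumerates S l /\ (length l <= k)%nat).

(* Main.v *)
Require Import Defs.
From Stdlib Require Import Reals List Lra Classical.
Import ListNotations.
Open Scope R_scope.

Definition det (x y : vec) : R := fst x * snd y - snd x * fst y.

Section Norm.
Variable N : vec -> R.
Hypothesis HN : is_norm N.

Lemma N_comb s t x y : N (vadd (vscale s x) (vscale t y)) <= Rabs s * N x + Rabs t * N y.
Proof.
  eapply Rle_trans; [apply (norm_triangle _ HN)|].
  rewrite !(norm_homog _ HN). lra.
Qed.

Lemma N_scale a x : N (vscale a x) = Rabs a * N x.
Proof. apply (norm_homog _ HN). Qed.

Lemma cone_half X Y Z T al be : 0 <= be -> be <= al ->
  Z = vadd (vscale al X) (vscale be Y) -> T = vadd (vadd X Y) (vscale (-1) Z) ->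
  N X = 1 -> N Y = 1 -> N Z = 1 -> N T <= 1.
Proof.
  intros Hb Hba EZ ET NX NY NZ.
  assert (h1 : 1 <= al + be).
  { rewrite <- NZ, EZ. eapply Rle_trans; [apply N_comb|].
    rewrite NX, NY, !Rabs_pos_eq; lra. }
  assert (h2 : al <= 1 + be).
  { assert (E : vscale al X = vadd (vscale 1 Z) (vscale (-be) Y)).
    { subst Z. destruct X, Y; unfold vadd, vscale; simpl; f_equal; ring. }
    pose proof (N_comb 1 (-be) Z Y) as H. rewrite <- E, N_scale, NX, NZ, NY in H.
    rewrite Rabs_pos_eq in H by lra. rewrite Rabs_R1, Rabs_Ropp, Rabs_pos_eq in H by lra. lra. }
  assert (h3 : al * N T <= Rabs (1 - al) + Rabs (al - be)).
  { assert (E : vscale al T = vadd (vscale (1 - al) Z) (vscale (al - be) Y)).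
    { subst Z T. destruct X, Y; unfold vadd, vscale; simpl; f_equal; ring. }
    pose proof (N_comb (1-al) (al-be) Z Y) as H. rewrite <- E, N_scale, NZ, NY in H.
    rewrite Rabs_pos_eq in H by lra. lra. }
  assert (h4 : al * N T <= al * 1).
  { rewrite (Rabs_pos_eq (al - be)) in h3 by lra.
    unfold Rabs in h3; destruct (Rcase_abs (1 - al)); lra. }
  apply Rmult_le_reg_l in h4; lra.
Qed.

Lemma cone X Y Z T al be : 0 <= al -> 0 <= be ->
  Z = vadd (vscale al X) (vscale be Y) -> T = vadd (vadd X Y) (vscale (-1) Z) ->
  N X = 1 -> N Y = 1 -> N Z = 1 -> N T <= 1.
Proof.
  intros Ha Hb EZ ET NX NY NZ.
  destruct (Rle_dec be al).
  - eapply cone_half; eauto.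
  - apply (cone_half Y X Z T be al); auto; try lra.
    + subst Z; destruct X, Y; unfold vadd, vscale; simpl; f_equal; ring.
    + subst T; destruct X, Y; unfold vadd, vscale; simpl; f_equal; ring.
Qed.

Lemma lin_dep m1 m2 m3 : det m1 m2 <> 0 ->
  m3 = vadd (vscale (- det m2 m3 / det m1 m2) m1) (vscale (- det m3 m1 / det m1 m2) m2).
Proof.
  destruct m1 as [x1 y1], m2 as [x2 y2], m3 as [x3 y3]; unfold det, vadd, vscale; simpl.
  intro H. f_equal; field; auto.
Qed.

Lemma coef_nonneg A C : C <> 0 -> A * C <= 0 -> 0 <= - A / C.
Proof.
  intros HC H. replace (- A / C) with ((- A * C) * / (C * C)) by (field; auto).
  apply Rmult_le_pos; [lra|]. apply Rlt_le, Rinv_0_lt_compat.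
  destruct (Rtotal_order C 0) as [h|[h|h]]; [nra|contradiction|nra].
Qed.

Lemma N_zero : N vzero = 0.
Proof.
  replace vzero with (vscale 0 vzero) by (unfold vscale, vzero; simpl; f_equal; ring).
  rewrite N_scale, Rabs_R0; ring.
Qed.

Lemma par x y : det x y = 0 -> N x = 1 -> N y = 1 -> y = x \/ y = vscale (-1) x.
Proof.
  intros Hd Nx Ny.
  assert (ex : exists t, y = vscale t x).
  { destruct x as [x1 x2], y as [y1 y2]; unfold det in Hd; simpl in Hd.
    destruct (Req_dec x1 0) as [h1|h1].
    - destruct (Req_dec x2 0) as [h2|h2].
      + subst. exfalso. pose proof N_zero. unfold vzero in H. lra.
      + exists (y2 / x2). unfold vscale; simpl. subst x1. f_equal.
        * apply (Rmult_eq_reg_l x2); auto. rewrite Rmult_0_r. lra.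
        * field; auto.
    - exists (y1 / x1). unfold vscale; simpl. f_equal.
      * field; auto.
      * apply (Rmult_eq_reg_l x1); auto. replace (x1 * (y1 / x1 * x2)) with (y1 * x2) by (field; auto). lra. }
  destruct ex as [t Et]. rewrite Et, N_scale, Nx in Ny.
  assert (Rabs t = 1) by lra.
  unfold Rabs in H; destruct (Rcase_abs t).
  - right. subst y. f_equal. lra.
  - left. subst y. destruct x; unfold vscale; simpl. f_equal; (replace t with 1 by lra); ring.
Qed.

Lemma signs A B C :
  (C>0 -> A<=0 -> B<=0 -> False) -> (C<0 -> A>=0 -> B>=0 -> False) ->
  (A>0 -> B<=0 -> C<=0 -> False) -> (A<0 -> B>=0 -> C>=0 -> False) ->
  (B>0 -> A<=0 -> C<=0 -> False) -> (B<0 -> A>=0 -> C>=0 -> False) ->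
  (C = 0 -> B = 0 -> False) ->
  (B+C>0 /\ C+A>0 /\ A+B>0) \/ (B+C<0 /\ C+A<0 /\ A+B<0).
Proof.
  intros H1 H2 H3 H4 H5 H6 H7.
  destruct (Rtotal_order A 0) as [HA|[HA|HA]];
  destruct (Rtotal_order B 0) as [HB|[HB|HB]];
  destruct (Rtotal_order C 0) as [HC|[HC|HC]];
  first [ left; repeat split; lra | right; repeat split; lra
        | exfalso; first [apply H1; lra | apply H2; lra | apply H3; lra | apply H4; lra
                         | apply H5; lra | apply H6; lra | apply H7; lra] ].
Qed.


Lemma triple (S : vec -> Prop) (HS : M_set N S) a b c :
  S a -> S b -> S c -> a <> b -> b <> c -> a <> c ->
  (0 < det a b /\ 0 < det b c /\ 0 < det c a) \/ (det a b < 0 /\ det b c < 0 /\ det c a < 0).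
Proof.
  intros Sa Sb Sc nab nbc nac. destruct HS as [Hm Hn].
  set (m1 := midpt a b); set (m2 := midpt b c); set (m3 := midpt c a).
  assert (N1 : N m1 = 1) by (apply Hm; auto).
  assert (N2 : N m2 = 1) by (apply Hm; auto).
  assert (N3 : N m3 = 1) by (apply Hm; auto).
  assert (Ea : a = vadd (vadd m3 m1) (vscale (-1) m2)) by
    (unfold m1, m2, m3; destruct a, b, c; unfold midpt, vadd, vscale; simpl; f_equal; lra).
  assert (Eb : b = vadd (vadd m1 m2) (vscale (-1) m3)) by
    (unfold m1, m2, m3; destruct a, b, c; unfold midpt, vadd, vscale; simpl; f_equal; lra).
  assert (Ec : c = vadd (vadd m2 m3) (vscale (-1) m1)) by
    (unfold m1, m2, m3; destruct a, b, c; unfold midpt, vadd, vscale; simpl; f_equal; lra).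
  pose proof (Hn a Sa). pose proof (Hn b Sb). pose proof (Hn c Sc).
  assert (RC : det m1 m2 <> 0 -> det m2 m3 * det m1 m2 <= 0 -> det m3 m1 * det m1 m2 <= 0 -> False).
  { intros h1 h2 h3.
    assert (N b <= 1).
    { apply (cone m1 m2 m3 b (- det m2 m3 / det m1 m2) (- det m3 m1 / det m1 m2)); [apply coef_nonneg; auto | apply coef_nonneg; auto
        | apply lin_dep; auto | exact Eb | auto | auto | auto]. }
    lra. }
  assert (RA : det m2 m3 <> 0 -> det m3 m1 * det m2 m3 <= 0 -> det m1 m2 * det m2 m3 <= 0 -> False).
  { intros h1 h2 h3.
    assert (N c <= 1).
    { apply (cone m2 m3 m1 c (- det m3 m1 / det m2 m3) (- det m1 m2 / det m2 m3)); [apply coef_nonneg; auto | apply coef_nonneg; auto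
        | apply lin_dep; auto | exact Ec | auto | auto | auto]. }
    lra. }
  assert (RB : det m3 m1 <> 0 -> det m1 m2 * det m3 m1 <= 0 -> det m2 m3 * det m3 m1 <= 0 -> False).
  { intros h1 h2 h3.
    assert (N a <= 1).
    { apply (cone m3 m1 m2 a (- det m1 m2 / det m3 m1) (- det m2 m3 / det m3 m1)); [apply coef_nonneg; auto | apply coef_nonneg; auto
        | apply lin_dep; auto | exact Ea | auto | auto | auto]. }
    lra. }
  assert (R0 : det m1 m2 = 0 -> det m3 m1 = 0 -> False).
  { intros h1 h2.
    destruct (par m1 m2 h1 N1 N2) as [e|e].
    - apply nac. unfold m1, m2 in e. destruct a, b, c; unfold midpt, vadd, vscale in e; simpl in e.
      inversion e. f_equal; lra.
    - assert (h3 : det m1 m3 = 0) by (unfold det in *; lra).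
      destruct (par m1 m3 h3 N1 N3) as [e'|e'].
      + apply nbc. unfold m1, m3 in e'. destruct a, b, c; unfold midpt, vadd, vscale in e'; simpl in e'.
        inversion e'. f_equal; lra.
      + apply nab. rewrite <- e in e'. unfold m2, m3 in e'.
        destruct a, b, c; unfold midpt, vadd, vscale in e'; simpl in e'.
        inversion e'. f_equal; lra. }
  assert (Hp : det a b = 2 * (det m3 m1 + det m1 m2)) by
    (unfold m1, m2, m3; destruct a, b, c; unfold det, midpt, vadd, vscale; simpl; field).
  assert (Hq : det b c = 2 * (det m1 m2 + det m2 m3)) by
    (unfold m1, m2, m3; destruct a, b, c; unfold det, midpt, vadd, vscale; simpl; field).
  assert (Hr : det c a = 2 * (det m2 m3 + det m3 m1)) by
    (unfold m1, m2, m3; destruct a, b, c; unfold det, midpt, vadd, vscale; simpl; field).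
  destruct (signs (det m2 m3) (det m3 m1) (det m1 m2)) as [[? [? ?]]|[? [? ?]]].
  - intros; apply RC; [lra|nra|nra].
  - intros; apply RC; [lra|nra|nra].
  - intros; apply RA; [lra|nra|nra].
  - intros; apply RA; [lra|nra|nra].
  - intros; apply RB; [lra|nra|nra].
  - intros; apply RB; [lra|nra|nra].
  - auto.
  - left; lra.
  - right; lra.
Qed.

Lemma four (S : vec -> Prop) (HS : M_set N S) a b c d :
  S a -> S b -> S c -> S d -> a <> b -> a <> c -> a <> d -> b <> c -> b <> d -> c <> d -> False.
Proof.
  intros. pose proof (triple S HS a b c) as T1. pose proof (triple S HS a b d) as T2.
  pose proof (triple S HS a c d) as T3.
  assert (E : det a c = - det c a) by (unfold det; ring).
  destruct T1 as [T1|T1]; auto; destruct T2 as [T2|T2]; auto; destruct T3 as [T3|T3]; auto; lra.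
Qed.

Lemma upper (S : vec -> Prop) : M_set N S -> exists l, enumerates S l /\ (length l <= 3)%nat.
Proof.
  intro HS.
  destruct (classic (exists a, S a)) as [[a Sa]|Hn].
  2:{ exists []. split; [split; [constructor|] | simpl; auto].
      intro x; split; [intro h; apply Hn; eauto | simpl; tauto]. }
  destruct (classic (exists b, S b /\ b <> a)) as [[b [Sb nba]]|Hn].
  2:{ exists [a]. split; [split; [constructor; [simpl; tauto|constructor]|] | simpl; auto].
      intro x; split; simpl.
      - intro h. left. destruct (classic (a = x)); auto. exfalso; apply Hn; eauto.
      - intros [h|[]]; subst; auto. }
  destruct (classic (exists c, S c /\ c <> a /\ c <> b)) as [[c [Sc [nca ncb]]]|Hn].
  2:{ exists [a; b]. split; [split|simpl; auto].
      - constructor; [simpl; intros [h|[]]; auto|constructor; [simpl; tauto|constructor]].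
      - intro x; split; simpl.
        + intro h. destruct (classic (a = x)); auto. destruct (classic (b = x)); auto.
          exfalso; apply Hn; eauto.
        + intros [h|[h|[]]]; subst; auto. }
  exists [a; b; c]. split; [split|simpl; auto].
  - constructor; [simpl; intros [h|[h|[]]]; auto|].
    constructor; [simpl; intros [h|[]]; auto|constructor; [simpl; tauto|constructor]].
  - intro x; split; simpl.
    + intro h. destruct (classic (a = x)); auto. destruct (classic (b = x)); auto.
      destruct (classic (c = x)); auto.
      exfalso; apply (four S HS a b c x); auto.
    + intros [h|[h|[h|[]]]]; subst; auto.
Qed.


Lemma Rabs_m1 : Rabs (-1) = 1.
Proof. unfold Rabs; destruct Rcase_abs; lra. Qed.

Lemma N_pos v : v <> vzero -> 0 < N v.
Proof.
  intro h. destruct (Rle_lt_or_eq_dec 0 (N v) (norm_nonneg _ HN v)); auto.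
  exfalso; apply h, (norm_definite _ HN); auto.
Qed.

Lemma Lip a1 a2 b1 b2 :
  Rabs (N (a1, a2) - N (b1, b2)) <= Rabs (a1 - b1) * N (1, 0) + Rabs (a2 - b2) * N (0, 1).
Proof.
  assert (G : forall a1 a2 b1 b2, N (a1, a2) - N (b1, b2) <= Rabs (a1 - b1) * N (1, 0) + Rabs (a2 - b2) * N (0, 1)).
  { clear a1 a2 b1 b2. intros.
    assert (E : (a1, a2) = vadd (b1, b2) (vadd (vscale (a1 - b1) (1, 0)) (vscale (a2 - b2) (0, 1)))).
    { unfold vadd, vscale; simpl; f_equal; ring. }
    rewrite E at 1. pose proof (norm_triangle _ HN (b1, b2) (vadd (vscale (a1 - b1) (1, 0)) (vscale (a2 - b2) (0, 1)))).
    pose proof (N_comb (a1 - b1) (a2 - b2) (1,0) (0,1)). lra. }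
  apply Rabs_le; split.
  - pose proof (G b1 b2 a1 a2). rewrite (Rabs_minus_sym b1), (Rabs_minus_sym b2) in H. lra.
  - apply G.
Qed.

Lemma cont_N f g t : continuity_pt f t -> continuity_pt g t -> continuity_pt (fun s => N (f s, g s)) t.
Proof.
  unfold continuity_pt, continue_in, limit1_in, limit_in. intros Hf Hg eps Heps.
  set (K := N (1, 0) + N (0, 1) + 1).
  assert (HK : 0 < K) by (unfold K; pose proof (norm_nonneg _ HN (1,0)); pose proof (norm_nonneg _ HN (0,1)); lra).
  assert (He : eps / K > 0) by (apply Rdiv_lt_0_compat; lra).
  destruct (Hf _ He) as [d1 [Hd1 H1]]. destruct (Hg _ He) as [d2 [Hd2 H2]].
  exists (Rmin d1 d2). split; [apply Rmin_pos; lra|].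
  intros x [Dx Hx]. simpl in *. unfold R_dist in *.
  assert (h1 : Rabs (f x - f t) < eps / K) by (apply H1; split; auto; pose proof (Rmin_l d1 d2); lra).
  assert (h2 : Rabs (g x - g t) < eps / K) by (apply H2; split; auto; pose proof (Rmin_r d1 d2); lra).
  eapply Rle_lt_trans; [apply Lip|].
  pose proof (norm_nonneg _ HN (1,0)). pose proof (norm_nonneg _ HN (0,1)).
  assert (eps = eps / K * K) by (field; lra).
  assert (Rabs (f x - f t) * N (1, 0) <= eps / K * N (1, 0)) by (apply Rmult_le_compat_r; lra).
  assert (Rabs (g x - g t) * N (0, 1) <= eps / K * N (0, 1)) by (apply Rmult_le_compat_r; lra).
  assert (eps / K * (N (1, 0) + N (0, 1)) < eps / K * K) by (apply Rmult_lt_compat_l; [lra| unfold K; lra]).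
  lra.
Qed.

Lemma hexa : exists x y, N x = 1 /\ N y = 1 /\ N (vadd x y) = 1.
Proof.
  set (n1 := N (1, 0)).
  assert (Hn1 : 0 < n1) by (apply N_pos; unfold vzero; intro h; inversion h; lra).
  set (phi := fun t => N ((1 - 2 * t) / n1, t * (1 - t))).
  assert (Hphi : forall t, 0 < phi t).
  { intro t. apply N_pos. unfold vzero; intro h; injection h as H0 H1.
    assert (t = 0 \/ t = 1) as [-> | ->] by (destruct (Rmult_integral _ _ H1); [left|right]; lra).
    - unfold Rdiv in H0. rewrite Rmult_0_r, Rminus_0_r, Rmult_1_l in H0.
      pose proof (Rinv_0_lt_compat _ Hn1). lra.
    - replace ((1 - 2 * 1) / n1) with (- / n1) in H0 by (field; lra).
      pose proof (Rinv_0_lt_compat _ Hn1). lra. }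
  set (f := fun t => 1 - N (/ n1 + / phi t * ((1 - 2 * t) / n1), 0 + / phi t * (t * (1 - t)))).
  assert (Hc : continuity f).
  { intro t. unfold f.
    apply (continuity_pt_minus (fun _ => 1) (fun t => N (/ n1 + / phi t * ((1 - 2 * t) / n1), 0 + / phi t * (t * (1 - t))))).
    - apply continuity_pt_const. intros a b; auto.
    - assert (Cp : forall t, continuity_pt (fun t => / phi t) t).
      { intro s. apply (continuity_pt_inv phi); [|pose proof (Hphi s); lra].
        unfold phi. apply cont_N; reg. }
      apply cont_N.
      + apply (continuity_pt_plus (fun _ => / n1) (fun t => / phi t * ((1 - 2 * t) / n1))).
        * apply continuity_pt_const. intros a b; auto.
        * apply (continuity_pt_mult (fun t => / phi t) (fun t => (1 - 2 * t) / n1)); auto. reg.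
      + apply (continuity_pt_plus (fun _ => 0) (fun t => / phi t * (t * (1 - t)))).
        * apply continuity_pt_const. intros a b; auto.
        * apply (continuity_pt_mult (fun t => / phi t) (fun t => t * (1 - t))); auto. reg. }
  assert (Hx : N (/ n1, 0) = 1).
  { replace (/ n1, 0) with (vscale (/ n1) (1, 0)) by (unfold vscale; simpl; f_equal; ring).
    rewrite N_scale. fold n1. rewrite Rabs_pos_eq; [field; lra | left; apply Rinv_0_lt_compat; lra]. }
  assert (P0 : phi 0 = 1).
  { unfold phi. transitivity (N (/ n1, 0)); [|exact Hx]. apply (f_equal N). f_equal; field; lra. }
  assert (P1 : phi 1 = 1).
  { unfold phi. transitivity (N (/ n1, 0)); [|exact Hx]. replace ((1 - 2 * 1) / n1, 1 * (1 - 1)) with (vscale (-1) (/ n1, 0))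
      by (unfold vscale; simpl; f_equal; field; lra).
    rewrite N_scale, Rabs_m1; ring. }
  assert (F0 : f 0 < 0).
  { unfold f. rewrite P0.
    replace (/ n1 + / 1 * ((1 - 2 * 0) / n1), 0 + / 1 * (0 * (1 - 0))) with (vscale 2 (/ n1, 0))
      by (unfold vscale; simpl; f_equal; field; lra).
    rewrite N_scale, Hx, Rabs_pos_eq; lra. }
  assert (F1 : 0 < f 1).
  { unfold f. rewrite P1.
    replace (/ n1 + / 1 * ((1 - 2 * 1) / n1), 0 + / 1 * (1 * (1 - 1))) with vzero
      by (unfold vzero; simpl; f_equal; field; lra).
    rewrite N_zero; lra. }
  destruct (IVT f 0 1 Hc Rlt_0_1 F0 F1) as [z [_ Fz]].
  exists (/ n1, 0), (vscale (/ phi z) ((1 - 2 * z) / n1, z * (1 - z))).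
  split; [exact Hx|split].
  - rewrite N_scale. fold (phi z). pose proof (Hphi z).
    rewrite Rabs_pos_eq; [field; lra | left; apply Rinv_0_lt_compat; lra].
  - unfold f in Fz. unfold vadd, vscale; simpl. lra.
Qed.

Lemma existence : exists S l, M_set N S /\ enumerates S l /\ length l = 3%nat.
Proof.
  destruct hexa as [x [y [Nx [Ny Nxy]]]].
  set (P := vscale (-2) x). set (Q := vscale (-2) y). set (R0 := vscale 2 (vadd x y)).
  assert (nPQ : P <> Q).
  { intro h. assert (vadd x y = vscale 2 x).
    { unfold P, Q in h; destruct x, y; unfold vscale, vadd in *; simpl in *; inversion h; f_equal; lra. }
    rewrite H, N_scale, Nx, Rabs_pos_eq in Nxy; lra. }
  assert (nPR : P <> R0).
  { intro h. assert (y = vscale (-2) x).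
    { unfold P, R0 in h; destruct x, y; unfold vscale, vadd in *; simpl in *; inversion h; f_equal; lra. }
    rewrite H, N_scale, Nx, Rabs_left in Ny; lra. }
  assert (nQR : Q <> R0).
  { intro h. assert (x = vscale (-2) y).
    { unfold Q, R0 in h; destruct x, y; unfold vscale, vadd in *; simpl in *; inversion h; f_equal; lra. }
    rewrite H, N_scale, Ny, Rabs_left in Nx; lra. }
  assert (M1 : midpt P Q = vscale (-1) (vadd x y)) by
    (unfold P, Q; destruct x, y; unfold midpt, vscale, vadd; simpl; f_equal; field).
  assert (M1' : midpt Q P = vscale (-1) (vadd x y)) by
    (unfold P, Q; destruct x, y; unfold midpt, vscale, vadd; simpl; f_equal; field).
  assert (M2 : midpt P R0 = y) by
    (unfold P, R0; destruct x, y; unfold midpt, vscale, vadd; simpl; f_equal; field).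
  assert (M2' : midpt R0 P = y) by
    (unfold P, R0; destruct x, y; unfold midpt, vscale, vadd; simpl; f_equal; field).
  assert (M3 : midpt Q R0 = x) by
    (unfold Q, R0; destruct x, y; unfold midpt, vscale, vadd; simpl; f_equal; field).
  assert (M3' : midpt R0 Q = x) by
    (unfold Q, R0; destruct x, y; unfold midpt, vscale, vadd; simpl; f_equal; field).
  assert (NM1 : N (vscale (-1) (vadd x y)) = 1) by (rewrite N_scale, Rabs_m1; lra).
  exists (fun v => v = P \/ v = Q \/ v = R0), [P; Q; R0].
  split; [split|split].
  - intros a b Ha Hb nab.
    destruct Ha as [ -> | [ -> | -> ] ]; destruct Hb as [ -> | [ -> | -> ] ];
      try (exfalso; apply nab; reflexivity);
      first [rewrite M1 | rewrite M1' | rewrite M2 | rewrite M2' | rewrite M3 | rewrite M3']; auto.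
  - intros a [ -> | [ -> | -> ] ]; unfold P, Q, R0; rewrite N_scale;
      [rewrite Nx | rewrite Ny | rewrite Nxy]; unfold Rabs; destruct Rcase_abs; lra.
  - split.
    + constructor; [simpl; intros [h|[h|[]]]; auto|].
      constructor; [simpl; intros [h|[]]; auto|constructor; [simpl; tauto|constructor]].
    + intro v; simpl; split; intros [h|[h|h]]; auto; destruct h as [h|[]]; auto.
  - reflexivity.
Qed.

End Norm.

Theorem theorem1 : forall N : vec -> R, is_norm N -> m_equals N 3.
Proof.
  intros N HN. split.
  - apply (existence N HN).
  - intros S HS. apply (upper N HN); auto.
Qed.
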